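(* For any sequence of groups $(G_n)_{n\in\mathbb N}$, the archipelago group is a direct limit $$\mathcal A(G_n)=\varinjlim_k \circledast_{i\ge k}G_i,$$ where the bonding maps are the quotient maps $\circledast_{i\ge k}G_i\to(\circledast_{i\ge k}G_i)/\langle\langle G_k\rangle\rangle\cong\circledast_{i\ge k+1}G_i$ (i.e. the maps deleting all letters from $G_k$).
   Context: For a sequence of groups $(G_n)_{n\in\mathbb N}$, an infinite word is a map $w:L\to\bigsqcup_n (G_n\setminus\{1\})$ from a countable linearly ordered set $L$ such that $w^{-1}(G_n)$ is finite for every $n$. Two infinite words are equivalent if for every $m$ their restrictions to the letters from $G_1,\dots,G_m$ represent the same element of $G_1*\cdots*G_m$. The topologist's product $\circledast_n G_n$ is the group of equivalence classes, with multiplication induced by concatenation and inversion by reversing the order and inverting each letter; $\circledast_{i\ge k}G_i$ is the same construction for the subsequence $(G_i)_{i\ge k}$. The free product $*_n G_n$ is the subgroup of classes of finite words. The archipelago group is $\mathcal A(G_n):=\circledast_n G_n/\langle\langle *_n G_n\rangle\rangle$, $\langle\langle\cdot\rangle\rangle$ denoting normal closure. *)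

(* Defs.v *)
From Stdlib Require Import List Sorting.Sorted Relations.Relation_Operators.
Import ListNotations.

Record Group := {
  gcar :> Type;
  gmul : gcar -> gcar -> gcar;
  ginv : gcar -> gcar;
  gone : gcar;
  gmulA : forall x y z, gmul x (gmul y z) = gmul (gmul x y) z;
  gmul1 : forall x, gmul gone x = x;
  gmulV : forall x, gmul (ginv x) x = gone
}.

Section Words.
Variable G : nat -> Group.

Definition letter := {n : nat & gcar (G n)}.
Definition lidx (a : letter) : nat := projT1 a.

Inductive fp_step : list letter -> list letter -> Prop :=
| fp_merge : forall (u v : list letter) (n : nat) (a b : gcar (G n)),
    fp_step (u ++ existT _ n a :: existT _ n b :: v)
            (u ++ existT _ n (gmul (G n) a b) :: v)
| fp_drop : forall (u v : list letter) (n : nat),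
    fp_step (u ++ existT _ n (gone (G n)) :: v) (u ++ v).

Definition fp_eq : list letter -> list letter -> Prop :=
  clos_refl_sym_trans (list letter) fp_step.

Record infword := {
  ipos : Type;
  ilt : ipos -> ipos -> Prop;
  iw : ipos -> letter
}.

Definition wf_word (k : nat) (w : infword) : Prop :=
  (forall x, ~ ilt w x x) /\
  (forall x y z, ilt w x y -> ilt w y z -> ilt w x z) /\
  (forall x y, ilt w x y \/ x = y \/ ilt w y x) /\
  (exists f : ipos w -> nat, forall x y, f x = f y -> x = y) /\
  (forall n, exists s : list (ipos w), forall l, lidx (iw w l) = n -> In l s) /\
  (forall l, projT2 (iw w l) <> gone (G (projT1 (iw w l)))) /\
  (forall l, k <= lidx (iw w l)).

Definition restr (w : infword) (m : nat) (s : list letter) : Prop :=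
  exists ls : list (ipos w),
    StronglySorted (ilt w) ls /\
    (forall l, In l ls <-> lidx (iw w l) <= m) /\
    s = map (iw w) ls.

Definition word_eqv (w v : infword) : Prop :=
  forall m s1 s2, restr w m s1 -> restr v m s2 -> fp_eq s1 s2.

Definition word_mul (w v : infword) : infword := {|
  ipos := (ipos w + ipos v)%type;
  ilt := fun x y => match x, y with
                    | inl a, inl b => ilt w a b
                    | inr a, inr b => ilt v a b
                    | inl _, inr _ => True
                    | inr _, inl _ => False
                    end;
  iw := fun x => match x with inl a => iw w a | inr b => iw v b end |}.

Definition word_inv (w : infword) : infword := {|
  ipos := ipos w;
  ilt := fun x y => ilt w y x;
  iw := fun x => existT _ (projT1 (iw w x)) (ginv _ (projT2 (iw w x))) |}.

Definition word_one : infword := {|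
  ipos := Empty_set;
  ilt := fun _ _ => False;
  iw := fun x => match x with end |}.

Definition finite_word (w : infword) : Prop :=
  exists s : list (ipos w), forall l, In l s.

Definition delete (k : nat) (w : infword) : infword := {|
  ipos := {l : ipos w | lidx (iw w l) <> k};
  ilt := fun a b => ilt w (proj1_sig a) (proj1_sig b);
  iw := fun a => iw w (proj1_sig a) |}.

End Words.

Record PreGrp := {
  pcar : Type;
  pmem : pcar -> Prop;
  peqv : pcar -> pcar -> Prop;
  pmul : pcar -> pcar -> pcar;
  pinv : pcar -> pcar;
  pone : pcar
}.

(* the members, modulo peqv, form a group under the operations *)
Definition is_group (P : PreGrp) : Prop :=
  pmem P (pone P) /\
  (forall x y, pmem P x -> pmem P y -> pmem P (pmul P x y)) /\
  (forall x, pmem P x -> pmem P (pinv P x)) /\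
  (forall x, pmem P x -> peqv P x x) /\
  (forall x y, pmem P x -> pmem P y -> peqv P x y -> peqv P y x) /\
  (forall x y z, pmem P x -> pmem P y -> pmem P z ->
     peqv P x y -> peqv P y z -> peqv P x z) /\
  (forall x x' y y', pmem P x -> pmem P x' -> pmem P y -> pmem P y' ->
     peqv P x x' -> peqv P y y' -> peqv P (pmul P x y) (pmul P x' y')) /\
  (forall x x', pmem P x -> pmem P x' -> peqv P x x' ->
     peqv P (pinv P x) (pinv P x')) /\
  (forall x y z, pmem P x -> pmem P y -> pmem P z ->
     peqv P (pmul P x (pmul P y z)) (pmul P (pmul P x y) z)) /\
  (forall x, pmem P x -> peqv P (pmul P (pone P) x) x) /\
  (forall x, pmem P x -> peqv P (pmul P (pinv P x) x) (pone P)).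

Definition is_hom (P Q : PreGrp) (f : pcar P -> pcar Q) : Prop :=
  (forall x, pmem P x -> pmem Q (f x)) /\
  (forall x y, pmem P x -> pmem P y -> peqv P x y -> peqv Q (f x) (f y)) /\
  (forall x y, pmem P x -> pmem P y ->
     peqv Q (f (pmul P x y)) (pmul Q (f x) (f y))).

Definition normal_sub (P : PreGrp) (N : pcar P -> Prop) : Prop :=
  (forall x, N x -> pmem P x) /\
  N (pone P) /\
  (forall x y, N x -> N y -> N (pmul P x y)) /\
  (forall x, N x -> N (pinv P x)) /\
  (forall x y, N x -> pmem P y -> N (pmul P (pmul P (pinv P y) x) y)) /\
  (forall x y, N x -> pmem P y -> peqv P x y -> N y).

Definition normal_closure (P : PreGrp) (S : pcar P -> Prop) (x : pcar P) : Prop :=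
  pmem P x /\
  forall N, normal_sub P N -> (forall y, pmem P y -> S y -> N y) -> N x.

Definition quot (P : PreGrp) (N : pcar P -> Prop) : PreGrp := {|
  pcar := pcar P;
  pmem := pmem P;
  peqv := fun x y => N (pmul P x (pinv P y));
  pmul := pmul P;
  pinv := pinv P;
  pone := pone P |}.

Definition topprod (G : nat -> Group) (k : nat) : PreGrp := {|
  pcar := infword G;
  pmem := wf_word G k;
  peqv := word_eqv G;
  pmul := word_mul G;
  pinv := word_inv G;
  pone := word_one G |}.

Definition free_prod_class (G : nat -> Group) (w : infword G) : Prop :=
  exists v, wf_word G 0 v /\ finite_word G v /\ word_eqv G w v.

Definition archipelago (G : nat -> Group) : PreGrp :=
  quot (topprod G 0) (normal_closure (topprod G 0) (free_prod_class G)).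

Definition is_direct_limit (P : nat -> PreGrp)
    (d : forall k, pcar (P k) -> pcar (P (S k)))
    (D : PreGrp) (psi : forall k, pcar (P k) -> pcar D) : Prop :=
  (forall k, is_group (P k)) /\
  (forall k, is_hom (P k) (P (S k)) (d k)) /\
  is_group D /\
  (forall k, is_hom (P k) D (psi k)) /\
  (forall k x, pmem (P k) x -> peqv D (psi (S k) (d k x)) (psi k x)) /\
  (forall (H : PreGrp) (f : forall k, pcar (P k) -> pcar H),
     is_group H ->
     (forall k, is_hom (P k) H (f k)) ->
     (forall k x, pmem (P k) x -> peqv H (f (S k) (d k x)) (f k x)) ->
     exists u : pcar D -> pcar H,
       is_hom D H u /\
       (forall k x, pmem (P k) x -> peqv H (u (psi k x)) (f k x)) /\
       (forall u' : pcar D -> pcar H,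
          is_hom D H u' ->
          (forall k x, pmem (P k) x -> peqv H (u' (psi k x)) (f k x)) ->
          forall y, pmem D y -> peqv H (u' y) (u y))).

(* Main.v *)
Require Import Defs.
From Stdlib Require Import List Sorting.Sorted Relations.Relation_Operators Lia PeanoNat.
From Stdlib Require Import Classical ClassicalEpsilon ProofIrrelevance.
Import ListNotations.

Section GroupLemmas.
Variable H : Group.
Local Notation "a * b" := (gmul H a b).
Local Notation "a ^-1" := (ginv H a) (at level 3).
Local Notation one := (gone H).

Lemma g_mulVr (a : H) : a * a^-1 = one.
Proof.
  rewrite <- (gmul1 H (a * a^-1)).
  rewrite <- (gmulV H (a^-1)) at 1.
  rewrite <- gmulA. rewrite (gmulA H (a^-1) a (a^-1)). rewrite gmulV, gmul1.
  apply gmulV.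
Qed.

Lemma g_mul1r (a : H) : a * one = a.
Proof. rewrite <- (gmulV H a), gmulA, g_mulVr. apply gmul1. Qed.

Lemma g_invinv (a : H) : (a^-1)^-1 = a.
Proof.
  rewrite <- (g_mul1r ((a^-1)^-1)). rewrite <- (gmulV H a), gmulA, gmulV. apply gmul1.
Qed.

Lemma g_invmul (a b : H) : (a * b)^-1 = b^-1 * a^-1.
Proof.
  assert (E : (a * b) * (b^-1 * a^-1) = one).
  { rewrite <- gmulA, (gmulA H b), g_mulVr, gmul1. apply g_mulVr. }
  rewrite <- (g_mul1r ((a*b)^-1)), <- E, gmulA, gmulV. apply gmul1.
Qed.

Lemma g_inv1 : one^-1 = one.
Proof. rewrite <- (g_mul1r (one^-1)). apply gmulV. Qed.

Lemma g_inv_eq1 (a : H) : a^-1 = one -> a = one.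
Proof. intro E. rewrite <- (g_invinv a), E. apply g_inv1. Qed.
End GroupLemmas.

Section SS.
Variable T : Type.
Variable R : T -> T -> Prop.

Lemma SS_app_gen (R0 : T -> T -> Prop) l1 l2 : StronglySorted R0 l1 -> StronglySorted R0 l2 ->
  (forall x y, In x l1 -> In y l2 -> R0 x y) -> StronglySorted R0 (l1 ++ l2).
Proof.
  induction l1 as [|a l1 IH]; simpl; intros H1 H2 H3; auto.
  inversion H1; subst. constructor.
  - apply IH; auto.
  - apply Forall_forall. intros y Hy. apply in_app_or in Hy as [Hy|Hy].
    + rewrite Forall_forall in H5. auto.
    + apply H3; simpl; auto.
Qed.

Lemma SS_app l1 l2 : StronglySorted R l1 -> StronglySorted R l2 ->
  (forall x y, In x l1 -> In y l2 -> R x y) -> StronglySorted R (l1 ++ l2).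
Proof.
  induction l1 as [|a l1 IH]; simpl; intros H1 H2 H3; auto.
  inversion H1; subst. constructor.
  - apply IH; auto.
  - apply Forall_forall. intros y Hy. apply in_app_or in Hy as [Hy|Hy].
    + rewrite Forall_forall in H5. auto.
    + apply H3; simpl; auto.
Qed.

Lemma SS_rev l : StronglySorted R l -> StronglySorted (fun a b => R b a) (rev l).
Proof.
  induction l as [|a l IH]; simpl; intros H1. constructor.
  inversion H1; subst. apply SS_app_gen; auto.
  - repeat constructor.
  - intros x y Hx [<-|[]]. rewrite <- in_rev in Hx. rewrite Forall_forall in H3; auto.
Qed.

Lemma SS_uniq (irr : forall x, ~ R x x) (tr : forall x y z, R x y -> R y z -> R x z) :
  forall l1 l2, StronglySorted R l1 -> StronglySorted R l2 ->
  (forall x, In x l1 <-> In x l2) -> l1 = l2.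
Proof.
  induction l1 as [|a l1 IH]; intros [|b l2] H1 H2 E; auto.
  - exfalso. apply (proj2 (E b)). left; auto.
  - exfalso. apply (proj1 (E a)). left; auto.
  - inversion H1; subst. inversion H2; subst.
    rewrite Forall_forall in H4, H6.
    assert (a = b).
    { destruct (proj1 (E a) (or_introl eq_refl)) as [->|Ha]; auto.
      destruct (proj2 (E b) (or_introl eq_refl)) as [->|Hb]; auto.
      exfalso. apply (irr a). eapply tr; [apply H4; exact Hb| apply H6; exact Ha]. }
    subst b. f_equal. apply IH; auto.
    intro x. split; intro Hx.
    + destruct (proj1 (E x) (or_intror Hx)) as [Ea|]; auto. exfalso. subst. eapply irr. apply H4. eassumption.
    + destruct (proj2 (E x) (or_intror Hx)) as [Ea|]; auto. exfalso. subst. eapply irr. apply H6. eassumption.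
Qed.

Lemma SS_insert (tr : forall x y z, R x y -> R y z -> R x z)
  (tot : forall x y, R x y \/ x = y \/ R y x) x :
  forall l, StronglySorted R l -> exists l', StronglySorted R l' /\
     forall z, In z l' <-> (z = x \/ In z l).
Proof.
  induction l as [|b l IH]; intros H1.
  - exists [x]. split. repeat constructor. simpl. intuition.
  - inversion H1; subst. rewrite Forall_forall in H3.
    destruct (tot x b) as [Hxb|[<-|Hbx]].
    + exists (x :: b :: l). split.
      * constructor; auto. constructor; auto. apply Forall_forall. simpl.
        intros y Hy; eauto.
      * simpl. intuition.
    + exists (x :: l). split; auto. simpl; intuition.
    + destruct (IH H2) as [l' [H4 H5]]. exists (b :: l'). split.
      * constructor; auto. apply Forall_forall. intros y Hy.
        apply H5 in Hy as [->|Hy]; auto.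
      * intro z. simpl. rewrite H5. intuition.
Qed.

Lemma SS_map U (R' : U -> U -> Prop) (f : T -> U) l :
  StronglySorted R l -> (forall a b, R a b -> R' (f a) (f b)) ->
  StronglySorted R' (map f l).
Proof.
  induction l as [|a l IH]; simpl; intros H1 H2. constructor.
  inversion H1; subst. constructor; auto.
  apply Forall_forall. intros y Hy. apply in_map_iff in Hy as [b [<- Hb]].
  rewrite Forall_forall in H4. auto.
Qed.
End SS.
Section FP.
Variable G : nat -> Group.
Local Notation letter := (letter G).
Local Notation fp_eq := (fp_eq G).
Local Notation fp_step := (fp_step G).

Definition linvl (a : letter) : letter := existT _ (projT1 a) (ginv _ (projT2 a)).
Definition linv (s : list letter) : list letter := rev (map linvl s).

Lemma linvl_inv a : linvl (linvl a) = a.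
Proof. destruct a as [n x]; unfold linvl; simpl. rewrite g_invinv. reflexivity. Qed.

Lemma linvl_ex n (x : G n) : linvl (existT _ n x) = existT _ n (ginv _ x).
Proof. reflexivity. Qed.

Lemma linv_app s t : linv (s ++ t) = linv t ++ linv s.
Proof. unfold linv. rewrite map_app, rev_app_distr. reflexivity. Qed.

Lemma linv_linv s : linv (linv s) = s.
Proof.
  unfold linv. rewrite map_rev, rev_involutive, map_map.
  rewrite <- (map_id s) at 2. apply map_ext. apply linvl_inv.
Qed.

Lemma linv_cons a s : linv (a :: s) = linv s ++ [linvl a].
Proof. reflexivity. Qed.

Lemma fp_refl s : fp_eq s s.
Proof. apply rst_refl. Qed.
Lemma fp_sym s t : fp_eq s t -> fp_eq t s.
Proof. apply rst_sym. Qed.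
Lemma fp_trans s t u : fp_eq s t -> fp_eq t u -> fp_eq s u.
Proof. apply rst_trans. Qed.

Lemma fp_step_l u s t : fp_step s t -> fp_step (u ++ s) (u ++ t).
Proof.
  intro H; destruct H.
  - rewrite !app_assoc. apply fp_merge.
  - rewrite !app_assoc. apply fp_drop.
Qed.

Lemma fp_step_r v s t : fp_step s t -> fp_step (s ++ v) (t ++ v).
Proof.
  intro H; destruct H.
  - rewrite <- !app_assoc. simpl. apply fp_merge.
  - rewrite <- !app_assoc. simpl. apply fp_drop.
Qed.

Lemma fp_app_l u s t : fp_eq s t -> fp_eq (u ++ s) (u ++ t).
Proof.
  intro H; induction H.
  - apply rst_step, fp_step_l; auto.
  - apply fp_refl.
  - apply fp_sym; auto.
  - eapply fp_trans; eauto.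
Qed.

Lemma fp_app_r v s t : fp_eq s t -> fp_eq (s ++ v) (t ++ v).
Proof.
  intro H; induction H.
  - apply rst_step, fp_step_r; auto.
  - apply fp_refl.
  - apply fp_sym; auto.
  - eapply fp_trans; eauto.
Qed.

Lemma fp_app s s' t t' : fp_eq s s' -> fp_eq t t' -> fp_eq (s ++ t) (s' ++ t').
Proof. intros H1 H2. eapply fp_trans. apply fp_app_r; eauto. apply fp_app_l; auto. Qed.

Lemma fp_cancel s : fp_eq (s ++ linv s) [].
Proof.
  induction s as [|a s IH]; simpl. apply fp_refl.
  rewrite linv_cons.
  change (fp_eq ([a] ++ (s ++ linv s ++ [linvl a])) []).
  rewrite (app_assoc s).
  eapply fp_trans. apply fp_app_l, fp_app_r, IH. simpl.
  destruct a as [n x]. unfold linvl; simpl.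
  eapply fp_trans. apply rst_step. apply (fp_merge G [] []). simpl.
  rewrite g_mulVr. apply rst_step. apply (fp_drop G [] [] n).
Qed.

Lemma fp_cancel_l s : fp_eq (linv s ++ s) [].
Proof. rewrite <- (linv_linv s) at 2. apply fp_cancel. Qed.

Lemma fp_linv s t : fp_eq s t -> fp_eq (linv s) (linv t).
Proof.
  intro H; induction H.
  - apply rst_step. destruct H.
    + unfold linv. rewrite !map_app, !rev_app_distr. simpl. rewrite <- !app_assoc. simpl.
      rewrite !linvl_ex, g_invmul. apply fp_merge.
    + unfold linv. rewrite !map_app, !rev_app_distr. simpl. rewrite <- !app_assoc. simpl.
      rewrite !linvl_ex, g_inv1. apply fp_drop.
  - apply fp_refl.
  - apply fp_sym; auto.
  - eapply fp_trans; eauto.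
Qed.

Definition filt (k : nat) (s : list letter) : list letter :=
  filter (fun a => negb (Nat.eqb (lidx G a) k)) s.

Lemma fp_filt k s t : fp_eq s t -> fp_eq (filt k s) (filt k t).
Proof.
  intro H; induction H.
  - destruct H; unfold filt; rewrite !filter_app; simpl; unfold lidx; simpl.
    + destruct (Nat.eqb n k); simpl. apply fp_refl. apply rst_step, fp_merge.
    + destruct (Nat.eqb n k); simpl. apply fp_refl. apply rst_step, fp_drop.
  - apply fp_refl.
  - apply fp_sym; auto.
  - eapply fp_trans; eauto.
Qed.
End FP.
Section Words2.
Variable G : nat -> Group.
Local Notation W := (infword G).
Local Notation wf := (wf_word G).
Local Notation restr := (restr G).
Local Notation mul := (word_mul G).
Local Notation inv := (word_inv G).
Local Notation one := (word_one G).
Local Notation lidx := (lidx G).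
Local Notation ipos := (ipos G).
Local Notation ilt := (ilt G).
Local Notation iw := (iw G).

Section WF.
Variables (k : nat) (w : W) (Hw : wf k w).
Lemma wf_irr : forall x, ~ ilt w x x.
Proof. apply Hw. Qed.
Lemma wf_tr : forall x y z, ilt w x y -> ilt w y z -> ilt w x z.
Proof. apply Hw. Qed.
Lemma wf_tot : forall x y, ilt w x y \/ x = y \/ ilt w y x.
Proof. apply Hw. Qed.
Lemma wf_cnt : exists f : ipos w -> nat, forall x y, f x = f y -> x = y.
Proof. apply Hw. Qed.
Lemma wf_fin : forall n, exists s : list (ipos w), forall l, lidx (iw w l) = n -> In l s.
Proof. apply Hw. Qed.
Lemma wf_ne1 : forall l, projT2 (iw w l) <> gone (G (projT1 (iw w l))).
Proof. apply Hw. Qed.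
Lemma wf_ge : forall l, k <= lidx (iw w l).
Proof. apply Hw. Qed.

Lemma wf_fin_le m : exists s : list (ipos w), forall l, lidx (iw w l) <= m -> In l s.
Proof.
  induction m as [|m IH].
  - destruct (wf_fin 0) as [s Hs]. exists s. intros l Hl. apply Hs. lia.
  - destruct IH as [s1 H1]. destruct (wf_fin (S m)) as [s2 H2]. exists (s1 ++ s2).
    intros l Hl. apply in_or_app. destruct (Nat.eq_dec (lidx (iw w l)) (S m)).
    right; auto. left; apply H1; lia.
Qed.

Lemma sorted_ex (P : ipos w -> Prop) (Pdec : forall l, P l \/ ~ P l) (L : list (ipos w)) :
  exists ls, StronglySorted (ilt w) ls /\ forall l, In l ls <-> (In l L /\ P l).
Proof.
  induction L as [|a L IH].
  - exists []. split. constructor. simpl; intuition.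
  - destruct IH as [ls [H1 H2]]. destruct (Pdec a) as [Pa|nPa].
    + destruct (SS_insert _ _ wf_tr wf_tot a ls H1) as [ls' [H3 H4]].
      exists ls'. split; auto. intro l. rewrite H4, H2. simpl. split.
      * intros [->|[]]; auto.
      * intros [[->|]]; auto.
    + exists ls. split; auto. intro l. rewrite H2. simpl. split.
      * intros []; auto.
      * intros [[->|]]; auto. contradiction.
Qed.

Lemma restr_ex m : exists s, restr w m s.
Proof.
  destruct (wf_fin_le m) as [L HL].
  destruct (sorted_ex (fun l => lidx (iw w l) <= m) (fun l => Nat.le_decidable _ _) L) as [ls [H1 H2]].
  exists (map (iw w) ls). exists ls. split; auto. split; auto.
  intro l. rewrite H2. intuition.
Qed.

Lemma restr_uniq m s t : restr w m s -> restr w m t -> s = t.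
Proof.
  intros [l1 [H1 [H2 ->]]] [l2 [H3 [H4 ->]]]. f_equal.
  apply (SS_uniq _ _ wf_irr wf_tr); auto.
  intro x. rewrite H2, H4. tauto.
Qed.
End WF.

Lemma restr_one m : restr one m [].
Proof.
  exists []. split. constructor. split; auto. intros [].
Qed.

Lemma restr_mul x y m s t : restr x m s -> restr y m t -> restr (mul x y) m (s ++ t).
Proof.
  intros [l1 [H1 [H2 ->]]] [l2 [H3 [H4 ->]]].
  exists (map inl l1 ++ map inr l2). split; [|split].
  - apply SS_app_gen.
    + apply (SS_map _ _ _ _ _ _ H1). simpl; auto.
    + apply (SS_map _ _ _ _ _ _ H3). simpl; auto.
    + intros a b Ha Hb. apply in_map_iff in Ha as [a' [<- _]].
      apply in_map_iff in Hb as [b' [<- _]]. simpl. exact I.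
  - intros [a|b]; simpl; rewrite in_app_iff, !in_map_iff.
    + rewrite <- H2. split.
      * intros [[a' [E Ha']]|[b' [E _]]]; [injection E as ->; auto|discriminate].
      * intro Ha. left. eauto.
    + rewrite <- H4. split.
      * intros [[a' [E _]]|[b' [E Hb']]]; [discriminate|injection E as ->; auto].
      * intro Hb. right. eauto.
  - rewrite map_app, !map_map. reflexivity.
Qed.

Lemma restr_inv x m s : restr x m s -> restr (inv x) m (linv G s).
Proof.
  intros [l1 [H1 [H2 ->]]]. exists (rev l1). split; [|split].
  - apply (SS_rev _ _ _ H1).
  - intro l. rewrite <- in_rev, H2. simpl. reflexivity.
  - unfold linv. rewrite map_map, map_rev. reflexivity.
Qed.

End Words2.
Section WordsD.
Variable G : nat -> Group.
Local Notation W := (infword G).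
Local Notation wf := (wf_word G).
Local Notation restr := (restr G).
Local Notation mul := (word_mul G).
Local Notation inv := (word_inv G).
Local Notation one := (word_one G).
Local Notation lidx := (lidx G).
Local Notation ipos := (ipos G).
Local Notation ilt := (ilt G).
Local Notation iw := (iw G).
Local Notation eqv := (word_eqv G).
Local Notation fp_eq := (fp_eq G).
Local Notation linv := (linv G).

Lemma wf_one k : wf k one.
Proof.
  repeat split; simpl.
  - intros [].
  - intros [].
  - intros [].
  - exists (fun _ => 0). intros [].
  - intro n. exists []. intros [].
  - intros [].
  - intros [].
Qed.

Lemma wf_mul k x y : wf k x -> wf k y -> wf k (mul x y).
Proof.
  intros Hx Hy. repeat split; simpl.
  - intros [a|a]; [apply (wf_irr _ _ _ Hx)|apply (wf_irr _ _ _ Hy)].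
  - intros [a|a] [b|b] [c|c]; simpl; try tauto;
      [apply (wf_tr _ _ _ Hx)|apply (wf_tr _ _ _ Hy)].
  - intros [a|a] [b|b]; simpl; auto.
    + destruct (wf_tot _ _ _ Hx a b) as [|[->|]]; auto.
    + destruct (wf_tot _ _ _ Hy a b) as [|[->|]]; auto.
  - destruct (wf_cnt _ _ _ Hx) as [f Hf]. destruct (wf_cnt _ _ _ Hy) as [g Hg].
    exists (fun z => match z with inl a => 2 * f a | inr b => 2 * g b + 1 end).
    intros [a|a] [b|b] E; try lia; f_equal; [apply Hf|apply Hg]; lia.
  - intro n. destruct (wf_fin _ _ _ Hx n) as [s Hs]. destruct (wf_fin _ _ _ Hy n) as [t Ht].
    exists (map inl s ++ map inr t). intros [a|a] Ha; apply in_or_app;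
      [left|right]; apply in_map; auto.
  - intros [a|a]; [apply (wf_ne1 _ _ _ Hx)|apply (wf_ne1 _ _ _ Hy)].
  - intros [a|a]; [apply (wf_ge _ _ _ Hx)|apply (wf_ge _ _ _ Hy)].
Qed.

Lemma wf_inv k x : wf k x -> wf k (inv x).
Proof.
  intros Hx. repeat split; simpl.
  - apply (wf_irr _ _ _ Hx).
  - intros a b c H1 H2. eapply (wf_tr _ _ _ Hx); eauto.
  - intros a b. destruct (wf_tot _ _ _ Hx a b) as [|[->|]]; auto.
  - apply (wf_cnt _ _ _ Hx).
  - apply (wf_fin _ _ _ Hx).
  - intros l E. apply (wf_ne1 _ _ _ Hx l). apply g_inv_eq1. exact E.
  - apply (wf_ge _ _ _ Hx).
Qed.

Lemma wf_mono k k' x : k <= k' -> wf k' x -> wf k x.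
Proof.
  intros Hk Hx. repeat split; try apply Hx.
  intro l. pose proof (wf_ge _ _ _ Hx l). lia.
Qed.

Lemma eqv_by k w v : wf k w -> wf k v ->
  (forall m, exists s t, restr w m s /\ restr v m t /\ fp_eq s t) -> eqv w v.
Proof.
  intros Hw Hv H m s t Hs Ht. destruct (H m) as [s' [t' [H1 [H2 H3]]]].
  rewrite (restr_uniq _ _ _ Hw _ _ _ Hs H1), (restr_uniq _ _ _ Hv _ _ _ Ht H2). auto.
Qed.

Lemma eqv_refl k w : wf k w -> eqv w w.
Proof.
  intros Hw m s t Hs Ht. rewrite (restr_uniq _ _ _ Hw _ _ _ Hs Ht). apply fp_refl.
Qed.

Lemma eqv_sym w v : eqv w v -> eqv v w.
Proof. intros H m s t Hs Ht. apply fp_sym. eapply H; eauto. Qed.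

Lemma eqv_trans k w v u : wf k v -> eqv w v -> eqv v u -> eqv w u.
Proof.
  intros Hv H1 H2 m s t Hs Ht. destruct (restr_ex _ _ _ Hv m) as [r Hr].
  eapply fp_trans; eauto.
Qed.

Ltac rr_solve k :=
  lazymatch goal with
  | |- forall m, exists s t, restr _ m s /\ restr _ m t /\ _ => idtac
  end;
  let m := fresh "m" in intro m;
  repeat match goal with
  | H : wf k ?x |- _ =>
      lazymatch goal with
      | _ : restr x m _ |- _ => fail
      | _ => let s := fresh "s" in let Hs := fresh "Hs" in
             destruct (restr_ex _ _ _ H m) as [s Hs]
      end
  end;
  eexists; eexists; split; [eauto 20 using restr_mul, restr_inv, restr_one
                           |split; [eauto 20 using restr_mul, restr_inv, restr_one|]].

Lemma eqv_mul k x x' y y' : wf k x -> wf k x' -> wf k y -> wf k y' ->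
  eqv x x' -> eqv y y' -> eqv (mul x y) (mul x' y').
Proof.
  intros Hx Hx' Hy Hy' E1 E2. apply (eqv_by k); auto using wf_mul.
  intro m.
  destruct (restr_ex _ _ _ Hx m) as [a Ha]. destruct (restr_ex _ _ _ Hx' m) as [a' Ha'].
  destruct (restr_ex _ _ _ Hy m) as [b Hb]. destruct (restr_ex _ _ _ Hy' m) as [b' Hb'].
  exists (a ++ b), (a' ++ b'). split; [|split]; auto using restr_mul.
  apply fp_app; eauto.
Qed.

Lemma eqv_inv k x x' : wf k x -> wf k x' -> eqv x x' -> eqv (inv x) (inv x').
Proof.
  intros Hx Hx' E. apply (eqv_by k); auto using wf_inv.
  intro m.
  destruct (restr_ex _ _ _ Hx m) as [a Ha]. destruct (restr_ex _ _ _ Hx' m) as [a' Ha'].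
  exists (linv a), (linv a'). split; [|split]; auto using restr_inv.
  apply fp_linv; eauto.
Qed.

Lemma eqv_assoc k x y z : wf k x -> wf k y -> wf k z -> eqv (mul x (mul y z)) (mul (mul x y) z).
Proof.
  intros Hx Hy Hz. apply (eqv_by k); auto using wf_mul. rr_solve k.
  rewrite app_assoc. apply fp_refl.
Qed.

Lemma eqv_id_l k x : wf k x -> eqv (mul one x) x.
Proof.
  intros Hx. apply (eqv_by k); auto using wf_mul, wf_one. rr_solve k. apply fp_refl.
Qed.

Lemma eqv_inv_l k x : wf k x -> eqv (mul (inv x) x) one.
Proof.
  intros Hx. apply (eqv_by k); auto using wf_mul, wf_one, wf_inv. rr_solve k. apply fp_cancel_l.
Qed.

Lemma topprod_group k : is_group (topprod G k).
Proof.
  unfold is_group; simpl.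
  split. apply wf_one.
  split. intros; apply wf_mul; auto.
  split. intros; apply wf_inv; auto.
  split. intros; eapply eqv_refl; eauto.
  split. intros; apply eqv_sym; auto.
  split. intros x y z Hx Hy Hz H1 H2; apply (eqv_trans k x y z); auto.
  split. intros; eapply eqv_mul; eauto.
  split. intros; eapply eqv_inv; eauto.
  split. intros; eapply eqv_assoc; eauto.
  split. intros; eapply eqv_id_l; eauto.
  intros; eapply eqv_inv_l; eauto.
Qed.

End WordsD.
Section WordsE.
Variable G : nat -> Group.
Local Notation W := (infword G).
Local Notation wf := (wf_word G).
Local Notation restr := (restr G).
Local Notation mul := (word_mul G).
Local Notation inv := (word_inv G).
Local Notation one := (word_one G).
Local Notation lidx := (lidx G).
Local Notation ipos := (ipos G).
Local Notation ilt := (ilt G).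
Local Notation iw := (iw G).
Local Notation eqv := (word_eqv G).
Local Notation fp_eq := (fp_eq G).
Local Notation linv := (linv G).

Lemma sig_eq (A : Type) (P : A -> Prop) (a b : {x | P x}) :
  proj1_sig a = proj1_sig b -> a = b.
Proof. destruct a as [a ha], b as [b hb]; simpl; intros ->. f_equal. apply proof_irrelevance. Qed.

Definition sub (w : W) (P : ipos w -> Prop) : W :=
  Build_infword G {l | P l} (fun a b => ilt w (proj1_sig a) (proj1_sig b))
    (fun a => iw w (proj1_sig a)).

Definition single (c : letter G) : W :=
  Build_infword G unit (fun _ _ => False) (fun _ => c).

Lemma delete_sub k w : delete G k w = sub w (fun l => lidx (iw w l) <> k).
Proof. reflexivity. Qed.

Lemma wf_sub k w P : wf k w -> wf k (sub w P).
Proof.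
  intros Hw. split; [|split; [|split; [|split; [|split; [|split]]]]]; simpl.
  - intro a. apply (wf_irr _ _ _ Hw).
  - intros a b c. apply (wf_tr _ _ _ Hw).
  - intros a b. destruct (wf_tot _ _ _ Hw (proj1_sig a) (proj1_sig b)) as [|[E|]]; auto.
    right; left. apply sig_eq; auto.
  - destruct (wf_cnt _ _ _ Hw) as [f Hf]. exists (fun a => f (proj1_sig a)).
    intros a b E. apply sig_eq. auto.
  - intro n. destruct (wf_fin _ _ _ Hw n) as [s Hs].
    exists (flat_map (fun l => match excluded_middle_informative (P l) with
                               | left h => [exist _ l h] | right _ => [] end) s).
    intros [l h] Hl. apply in_flat_map. exists l. split. apply Hs; auto.
    destruct (excluded_middle_informative (P l)) as [h'|n']; [|contradiction].
    left. apply sig_eq; reflexivity.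
  - intro a. apply (wf_ne1 _ _ _ Hw).
  - intro a. apply (wf_ge _ _ _ Hw).
Qed.

Lemma wf_single k c : projT2 c <> gone (G (projT1 c)) -> k <= lidx c -> wf k (single c).
Proof.
  intros H1 H2. split; [|split; [|split; [|split; [|split; [|split]]]]]; simpl; auto.
  - intros [] []; auto.
  - exists (fun _ => 0). intros [] [] _; auto.
  - intro n. exists [tt]. intros [] _; simpl; auto.
Qed.

Lemma wf_delete k w : wf k w -> wf (S k) (delete G k w).
Proof.
  intros Hw. pose proof (wf_sub k w (fun l => lidx (iw w l) <> k) Hw) as H.
  split; [|split; [|split; [|split; [|split; [|split]]]]]; try apply H.
  intros [l h]; simpl. pose proof (wf_ge _ _ _ Hw l). simpl in h. lia.
Qed.

Section Iso.
Variables (v w : W) (f : ipos v -> ipos w) (g : ipos w -> ipos v).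
Hypotheses (gf : forall a, g (f a) = a) (fg : forall b, f (g b) = b)
  (fo : forall a b, ilt v a b -> ilt w (f a) (f b)) (fl : forall a, iw w (f a) = iw v a).

Lemma iso_restr m s : restr v m s -> restr w m s.
Proof.
  intros [ls [H1 [H2 ->]]]. exists (map f ls). split; [|split].
  - eapply SS_map; eauto.
  - intro l. split.
    + intro Hl. apply in_map_iff in Hl as [a [<- Ha]]. rewrite fl. apply H2; auto.
    + intro Hl. rewrite <- (fg l). apply in_map. apply H2. rewrite <- fl, fg. auto.
  - rewrite map_map. apply map_ext. intro; rewrite fl; auto.
Qed.

Lemma iso_eqv k : wf k w -> eqv v w.
Proof.
  intros Hw m s t Hs Ht. apply iso_restr in Hs.
  rewrite (restr_uniq _ _ _ Hw _ _ _ Hs Ht). apply fp_refl.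
Qed.
End Iso.

Lemma sub_full_eqv k w (P : ipos w -> Prop) : wf k w -> (forall l, P l) -> eqv (sub w P) w.
Proof.
  intros Hw HP. apply (iso_eqv (sub w P) w (@proj1_sig _ _) (fun l => exist _ l (HP l)))
    with (k := k); auto.
  all: try (intro a; apply sig_eq; reflexivity).
Qed.

Lemma sub_iff_eqv k w (P Q : ipos w -> Prop) : wf k w -> (forall l, P l <-> Q l) ->
  eqv (sub w P) (sub w Q).
Proof.
  intros Hw HPQ.
  apply (iso_eqv (sub w P) (sub w Q) (fun a => exist _ (proj1_sig a) (proj1 (HPQ _) (proj2_sig a)))
    (fun a => exist _ (proj1_sig a) (proj2 (HPQ _) (proj2_sig a)))) with (k := k); auto.
  all: try (intro a; apply sig_eq; reflexivity).
  all: try (apply wf_sub; auto).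
Qed.

Lemma sub_sub_eqv k w (P : ipos w -> Prop) (Q : ipos (sub w P) -> Prop) (R : ipos w -> Prop)
  (HRP : forall l, R l -> P l) (HQ : forall l (h : P l), Q (exist _ l h) <-> R l) :
  wf k w -> eqv (sub (sub w P) Q) (sub w R).
Proof.
  intros Hw.
  apply (iso_eqv (sub (sub w P) Q) (sub w R)
    (fun z => match z with exist _ (exist _ l h) q => exist R l (proj1 (HQ l h) q) end)
    (fun z => match z with exist _ l r => exist Q (exist P l (HRP l r))
                (proj2 (HQ l (HRP l r)) r) end)) with (k := k).
  all: first [ intros [[l h] q]; apply sig_eq; apply sig_eq; reflexivity
             | intros [l r]; apply sig_eq; reflexivity
             | intros [[l h] q] [[l' h'] q']; simpl; auto
             | intros [[l h] q]; simpl; auto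
             | apply wf_sub; auto ].
Qed.

End WordsE.
Section WordsF.
Variable G : nat -> Group.
Local Notation W := (infword G).
Local Notation wf := (wf_word G).
Local Notation restr := (restr G).
Local Notation mul := (word_mul G).
Local Notation inv := (word_inv G).
Local Notation one := (word_one G).
Local Notation lidx := (lidx G).
Local Notation ipos := (ipos G).
Local Notation ilt := (ilt G).
Local Notation iw := (iw G).
Local Notation eqv := (word_eqv G).
Local Notation fp_eq := (fp_eq G).
Local Notation linv := (linv G).
Local Notation sub := (sub G).
Local Notation single := (single G).

Section Decomp.
Variables (k : nat) (y : W) (Hy : wf k y) (p : ipos y).
Let A := sub y (fun l => ilt y l p).
Let B := sub y (fun l => ilt y p l).

Lemma lt_neq l : ilt y l p -> l <> p.
Proof. intros H E. subst. apply (wf_irr _ _ _ Hy p H). Qed.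
Lemma gt_neq l : ilt y p l -> l <> p.
Proof. intros H E. subst. apply (wf_irr _ _ _ Hy p H). Qed.

Definition dc1 (z : ipos (mul A (mul (single (iw y p)) B))) : ipos y :=
  match z with inl a => proj1_sig a | inr (inl _) => p | inr (inr b) => proj1_sig b end.

Definition dc1i (l : ipos y) : ipos (mul A (mul (single (iw y p)) B)) :=
  match excluded_middle_informative (ilt y l p) with
  | left h => inl (exist _ l h)
  | right _ => match excluded_middle_informative (ilt y p l) with
               | left h => inr (inr (exist _ l h))
               | right _ => inr (inl tt) end end.

Lemma decomp1 : eqv (mul A (mul (single (iw y p)) B)) y.
Proof.
  apply (iso_eqv G _ _ dc1 dc1i) with (k := k); auto.
  - intro l; unfold dc1i.
    destruct (excluded_middle_informative (ilt y l p)) as [h'|n]; simpl; auto.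
    destruct (excluded_middle_informative (ilt y p l)) as [h'|n']; simpl; auto.
    destruct (wf_tot _ _ _ Hy l p) as [|[->|]]; tauto.
  - intros [[a ha]|[[]|[a ha]]] [[b hb]|[[]|[b hb]]]; simpl; try tauto;
      intros; eauto using (wf_tr _ _ _ Hy).
  - intros [[a ha]|[[]|[a ha]]]; reflexivity.
Qed.

Definition dc2 (z : ipos (mul A B)) : ipos (sub y (fun l => l <> p)) :=
  match z with inl a => exist _ (proj1_sig a) (lt_neq _ (proj2_sig a))
          | inr b => exist _ (proj1_sig b) (gt_neq _ (proj2_sig b)) end.

Lemma tot_neq l : l <> p -> ~ ilt y l p -> ilt y p l.
Proof. intros H1 H2. destruct (wf_tot _ _ _ Hy l p) as [|[|]]; tauto. Qed.

Definition dc2i (z : ipos (sub y (fun l => l <> p))) : ipos (mul A B) :=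
  match z with exist _ l h =>
  match excluded_middle_informative (ilt y l p) with
  | left h' => inl (exist _ l h')
  | right n => inr (exist _ l (tot_neq l h n)) end end.

Lemma decomp2 : eqv (mul A B) (sub y (fun l => l <> p)).
Proof.
  apply (iso_eqv G _ _ dc2 dc2i) with (k := k); auto.
  - intros [l h]; unfold dc2i.
    destruct (excluded_middle_informative (ilt y l p)) as [h'|n]; simpl; apply sig_eq; reflexivity.
  - intros [[a ha]|[a ha]] [[b hb]|[b hb]]; simpl; try tauto;
      intros; eauto using (wf_tr _ _ _ Hy).
  - intros [[a ha]|[a ha]]; reflexivity.
  - apply wf_sub; auto.
Qed.
End Decomp.
End WordsF.
Section WordsG.
Variable G : nat -> Group.
Local Notation W := (infword G).
Local Notation wf := (wf_word G).
Local Notation restr := (restr G).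
Local Notation mul := (word_mul G).
Local Notation inv := (word_inv G).
Local Notation one := (word_one G).
Local Notation lidx := (lidx G).
Local Notation ipos := (ipos G).
Local Notation ilt := (ilt G).
Local Notation iw := (iw G).
Local Notation eqv := (word_eqv G).
Local Notation fp_eq := (fp_eq G).
Local Notation linv := (linv G).
Local Notation sub := (sub G).
Local Notation single := (single G).
Local Notation P0 := (topprod G 0).
Definition NC := normal_closure (topprod G 0) (free_prod_class G).

Lemma NC_wf x : NC x -> wf 0 x.
Proof. intros [H _]; exact H. Qed.

Lemma NC_gen x : wf 0 x -> free_prod_class G x -> NC x.
Proof. intros H1 H2. split; auto. Qed.

Lemma NC_one : NC one.
Proof. split. apply wf_one. intros N (H1&H2&H3&H4&H5&H6) _. exact H2. Qed.

Lemma NC_mul x y : NC x -> NC y -> NC (mul x y).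
Proof.
  intros [Hx Fx] [Hy Fy]. split. apply wf_mul; auto.
  intros N HN HS. pose proof HN as (H1&H2&H3&H4&H5&H6). apply H3; [apply Fx|apply Fy]; auto.
Qed.

Lemma NC_inv x : NC x -> NC (inv x).
Proof.
  intros [Hx Fx]. split. apply wf_inv; auto.
  intros N HN HS. pose proof HN as (H1&H2&H3&H4&H5&H6). apply H4; apply Fx; auto.
Qed.

Lemma NC_conj x y : NC x -> wf 0 y -> NC (mul (mul (inv y) x) y).
Proof.
  intros [Hx Fx] Hy. split. apply wf_mul; auto. apply wf_mul; auto. apply wf_inv; auto.
  intros N HN HS. pose proof HN as (H1&H2&H3&H4&H5&H6). apply H5; auto; apply Fx; auto.
Qed.

Lemma NC_eqv x y : NC x -> wf 0 y -> eqv x y -> NC y.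
Proof.
  intros [Hx Fx] Hy E. split; auto.
  intros N HN HS. pose proof HN as (H1&H2&H3&H4&H5&H6). apply (H6 x y); auto; apply Fx; auto.
Qed.

Definition Qr x y := NC (mul x (inv y)).

Lemma fpc_r s v : fp_eq (s ++ (linv s ++ v)) v.
Proof. rewrite app_assoc. apply (fp_app_r G v _ []). apply fp_cancel. Qed.
Lemma fpc_l s v : fp_eq (linv s ++ (s ++ v)) v.
Proof. rewrite app_assoc. apply (fp_app_r G v _ []). apply fp_cancel_l. Qed.

Lemma eqv_inv_r k x : wf k x -> eqv (mul x (inv x)) one.
Proof.
  intros Hx. apply (eqv_by G k); auto using wf_mul, wf_one, wf_inv.
  intro m. destruct (restr_ex _ _ _ Hx m) as [s Hs].
  exists (s ++ linv s), []. split; [|split]; auto using restr_mul, restr_inv, restr_one.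
  apply fp_cancel.
Qed.

Ltac wfs := repeat (first [apply wf_mul | apply wf_inv | apply wf_one]); auto.

Lemma Q_of_eqv x y : wf 0 x -> wf 0 y -> eqv x y -> Qr x y.
Proof.
  intros Hx Hy E. apply NC_eqv with (x := one); [apply NC_one|wfs|].
  apply eqv_sym. apply (eqv_trans G 0) with (mul y (inv y)); [wfs| |].
  apply (eqv_mul G 0); try wfs. apply (eqv_refl G 0); wfs.
  apply (eqv_inv_r 0); auto.
Qed.

Ltac getr H m := let s := fresh "s" in let Hs := fresh "Hs" in destruct (restr_ex _ _ _ H m) as [s Hs].

Lemma Q_sym x y : wf 0 x -> wf 0 y -> Qr x y -> Qr y x.
Proof.
  intros Hx Hy HQ. apply NC_eqv with (x := inv (mul x (inv y))); [apply NC_inv; auto|wfs|].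
  apply (eqv_by G 0); try wfs. intro m. getr Hx m. getr Hy m.
  exists (linv (s ++ linv s0)), (s0 ++ linv s). split; [|split]; auto using restr_mul, restr_inv.
  rewrite linv_app, linv_linv. apply fp_refl.
Qed.

Lemma Q_trans x y z : wf 0 x -> wf 0 y -> wf 0 z -> Qr x y -> Qr y z -> Qr x z.
Proof.
  intros Hx Hy Hz H1 H2. apply NC_eqv with (x := mul (mul x (inv y)) (mul y (inv z)));
    [apply NC_mul; auto|wfs|].
  apply (eqv_by G 0); try wfs. intro m. getr Hx m. getr Hy m. getr Hz m.
  exists ((s ++ linv s0) ++ (s0 ++ linv s1)), (s ++ linv s1).
  split; [|split]; auto using restr_mul, restr_inv.
  rewrite <- !app_assoc. apply fp_app_l. apply fpc_l.
Qed.

Lemma Q_mul x x' y y' : wf 0 x -> wf 0 x' -> wf 0 y -> wf 0 y' -> Qr x x' -> Qr y y' ->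
  Qr (mul x y) (mul x' y').
Proof.
  intros Hx Hx' Hy Hy' H1 H2.
  apply NC_eqv with (x := mul (mul (mul (inv (inv x)) (mul y (inv y'))) (inv x)) (mul x (inv x')));
    [apply NC_mul; auto; apply NC_conj; auto; wfs|wfs|].
  apply (eqv_by G 0); try wfs. intro m. getr Hx m. getr Hy m. getr Hx' m. getr Hy' m.
  eexists; eexists; split; [|split]; eauto 20 using restr_mul, restr_inv.
  rewrite !linv_app, !linv_linv, <- !app_assoc. apply fp_app_l. apply fp_app_l. apply fp_app_l.
  apply fpc_l.
Qed.

Lemma Q_inv x x' : wf 0 x -> wf 0 x' -> Qr x x' -> Qr (inv x) (inv x').
Proof.
  intros Hx Hx' H1.
  apply NC_eqv with (x := mul (mul (inv x) (inv (mul x (inv x')))) x);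
    [apply NC_conj; auto; apply NC_inv; auto|wfs|].
  apply (eqv_by G 0); try wfs. intro m. getr Hx m. getr Hx' m.
  eexists; eexists; split; [|split]; eauto 20 using restr_mul, restr_inv.
  rewrite !linv_app, !linv_linv, <- !app_assoc. apply fp_app_l. rewrite <- (app_nil_r s0) at 2. apply fp_app_l. apply fp_cancel_l.
Qed.

Lemma archipelago_group : is_group (archipelago G).
Proof.
  unfold is_group; simpl. fold NC. fold (Qr).
  split. apply wf_one.
  split. intros; apply wf_mul; auto.
  split. intros; apply wf_inv; auto.
  split. intros; apply Q_of_eqv; auto. apply (eqv_refl G 0); auto.
  split. intros; apply Q_sym; auto.
  split. intros x y z Hx Hy Hz H1 H2; apply (Q_trans x y z); auto.
  split. intros; apply Q_mul; auto.
  split. intros; apply Q_inv; auto.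
  split. intros; apply Q_of_eqv; auto using wf_mul. apply (eqv_assoc G 0); auto.
  split. intros; apply Q_of_eqv; auto using wf_mul, wf_one. apply (eqv_id_l G 0); auto.
  intros; apply Q_of_eqv; auto using wf_mul, wf_one, wf_inv. apply (eqv_inv_l G 0); auto.
Qed.

End WordsG.
Ltac wfs := repeat (first [apply wf_mul | apply wf_inv | apply wf_one]); auto.
Ltac getr H m := let s := fresh "s" in let Hs := fresh "Hs" in destruct (restr_ex _ _ _ H m) as [s Hs].
Section WordsH.
Variable G : nat -> Group.
Local Notation W := (infword G).
Local Notation wf := (wf_word G).
Local Notation restr := (restr G).
Local Notation mul := (word_mul G).
Local Notation inv := (word_inv G).
Local Notation one := (word_one G).
Local Notation lidx := (lidx G).
Local Notation ipos := (ipos G).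
Local Notation ilt := (ilt G).
Local Notation iw := (iw G).
Local Notation eqv := (word_eqv G).
Local Notation fp_eq := (fp_eq G).
Local Notation linv := (linv G).
Local Notation sub := (sub G).
Local Notation single := (single G).
Local Notation Qr := (Qr G).
Local Notation NC := (NC G).

Lemma remove_one y p : wf 0 y -> Qr (sub y (fun l => l <> p)) y.
Proof.
  intros Hy.
  set (A := sub y (fun l => ilt y l p)). set (B := sub y (fun l => ilt y p l)).
  set (g := single (iw y p)).
  assert (HA : wf 0 A) by (apply wf_sub; auto).
  assert (HB : wf 0 B) by (apply wf_sub; auto).
  assert (Hg : wf 0 g) by (apply wf_single; [apply (wf_ne1 _ _ _ Hy)|lia]).
  assert (Hs : wf 0 (sub y (fun l => l <> p))) by (apply wf_sub; auto).
  apply (Q_trans G) with (mul A B); try wfs.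
  - apply Q_of_eqv; try wfs. apply eqv_sym. apply (decomp2 G 0); auto.
  - apply NC_eqv with (x := mul (mul (inv (inv A)) (inv g)) (inv A)); [| wfs |].
    + apply NC_conj; [|wfs]. apply NC_inv. apply NC_gen; auto.
      exists g. split; auto. split. exists [tt]. intros []; simpl; auto.
      apply (eqv_refl G 0); auto.
    + apply (eqv_trans G 0) with (mul (mul A B) (inv (mul A (mul g B)))); [wfs| |].
      * apply (eqv_by G 0); try wfs. intro m. getr HA m. getr HB m. getr Hg m.
        eexists; eexists; split; [|split]; eauto 20 using restr_mul, restr_inv.
        rewrite !linv_app, !linv_linv, <- !app_assoc. apply fp_app_l.
        apply fp_sym. apply fpc_r.
      * apply (eqv_mul G 0); try wfs. apply (eqv_refl G 0); wfs.
        apply (eqv_inv G 0); try wfs. apply (decomp1 G 0); auto.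
Qed.

Lemma remove_list x : wf 0 x -> forall L, Qr (sub x (fun l => ~ In l L)) x.
Proof.
  intros Hx L. induction L as [|p L IH].
  - apply Q_of_eqv; [apply wf_sub; auto|auto|]. apply (sub_full_eqv G 0); auto.
  - assert (HY : wf 0 (sub x (fun l => ~ In l L))) by (apply wf_sub; auto).
    apply (Q_trans G) with (sub x (fun l => ~ In l L)); auto; try (apply wf_sub; auto).
    destruct (classic (In p L)) as [Hp|Hp].
    + apply Q_of_eqv; try (apply wf_sub; auto). apply (sub_iff_eqv G 0); auto.
      intro l. simpl. split; intros H1 H2; apply H1; auto.
      destruct H2 as [<-|]; auto.
    + set (p' := exist (fun l => ~ In l L) p Hp : ipos (sub x (fun l => ~ In l L))).
      apply (Q_trans G) with (sub (sub x (fun l => ~ In l L)) (fun z => z <> p'));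
        try (apply wf_sub; auto).
      * apply Q_of_eqv; try (apply wf_sub; auto). apply eqv_sym.
        apply (sub_sub_eqv G 0); auto.
        -- intros l H1 H2. apply H1; simpl; auto.
        -- intros l h. simpl. split.
           ++ intros H1 [E|H2]; [|contradiction]. subst l. apply H1. apply sig_eq; reflexivity.
           ++ intros H1 E. apply H1. left. apply (f_equal (@proj1_sig _ _)) in E. simpl in E. auto.
      * apply remove_one; auto.
Qed.

Lemma Q_delete k x : wf k x -> Qr (delete G k x) x.
Proof.
  intros Hk. assert (Hx : wf 0 x) by (apply (wf_mono G 0 k); auto; lia).
  destruct (wf_fin _ _ _ Hk k) as [s Hs].
  set (L := filter (fun l => Nat.eqb (lidx (iw x l)) k) s).
  apply (Q_trans G _ (sub x (fun l => ~ In l L)) _ (wf_sub _ _ _ _ Hx) (wf_sub _ _ _ _ Hx) Hx).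
  - apply (Q_of_eqv G _ _ (wf_sub _ _ _ _ Hx) (wf_sub _ _ _ _ Hx)). apply (sub_iff_eqv G 0); auto.
    intro l. unfold L. rewrite filter_In, Nat.eqb_eq. split.
    + intros H1 [_ H2]. auto.
    + intros H1 H2. apply H1. split; auto.
  - apply remove_list; auto.
Qed.
End WordsH.
Section AbsGroup.
Variable P : PreGrp.
Hypothesis HP : is_group P.
Local Notation mem := (pmem P).
Local Notation e := (peqv P).
Local Notation "a * b" := (pmul P a b).
Local Notation "a ^-1" := (pinv P a) (at level 3).
Local Notation one := (pone P).

Lemma ag_one : mem one. Proof. apply HP. Qed.
Lemma ag_mul a b : mem a -> mem b -> mem (a * b). Proof. apply HP. Qed.
Lemma ag_inv a : mem a -> mem (a^-1). Proof. apply HP. Qed.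
Lemma ag_refl a : mem a -> e a a. Proof. apply HP. Qed.
Lemma ag_sym a b : mem a -> mem b -> e a b -> e b a. Proof. apply HP. Qed.
Lemma ag_trans a b c : mem a -> mem b -> mem c -> e a b -> e b c -> e a c. Proof. apply HP. Qed.
Lemma ag_mulc a a' b b' : mem a -> mem a' -> mem b -> mem b' -> e a a' -> e b b' -> e (a * b) (a' * b').
Proof. apply HP. Qed.
Lemma ag_assoc a b c : mem a -> mem b -> mem c -> e (a * (b * c)) ((a * b) * c). Proof. apply HP. Qed.
Lemma ag_idl a : mem a -> e (one * a) a. Proof. apply HP. Qed.
Lemma ag_invl a : mem a -> e (a^-1 * a) one. Proof. apply HP. Qed.

Hint Resolve ag_one ag_mul ag_inv ag_refl : ag.

Ltac tr b := apply (ag_trans _ b); auto with ag.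

Lemma ag_idem a : mem a -> e (a * a) a -> e a one.
Proof.
  intros Ha E.
  tr (one * a). apply ag_sym; auto with ag. apply ag_idl; auto with ag.
  tr ((a^-1 * a) * a). apply ag_mulc; auto with ag. apply ag_sym; auto with ag. apply ag_invl; auto with ag.
  tr (a^-1 * (a * a)). apply ag_sym; auto with ag. apply ag_assoc; auto with ag.
  tr (a^-1 * a). apply ag_mulc; auto with ag. apply ag_invl; auto with ag.
Qed.

Lemma ag_invr a : mem a -> e (a * a^-1) one.
Proof.
  intros Ha. apply ag_idem; auto with ag.
  tr (a * (a^-1 * (a * a^-1))). apply ag_sym; auto with ag; apply ag_assoc; auto with ag.
  apply ag_mulc; auto with ag.
  tr ((a^-1 * a) * a^-1). apply ag_assoc; auto with ag.
  tr (one * a^-1). apply ag_mulc; auto with ag. apply ag_invl; auto with ag. apply ag_idl; auto with ag.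
Qed.

Lemma ag_idr a : mem a -> e (a * one) a.
Proof.
  intros Ha. tr (a * (a^-1 * a)). apply ag_mulc; auto with ag. apply ag_sym; auto with ag. apply ag_invl; auto with ag.
  tr ((a * a^-1) * a). apply ag_assoc; auto with ag.
  tr (one * a). apply ag_mulc; auto with ag. apply ag_invr; auto with ag. apply ag_idl; auto with ag.
Qed.
End AbsGroup.

Global Hint Resolve ag_one ag_mul ag_inv ag_refl : ag.

Section Hom.
Variables (P H : PreGrp) (HP : is_group P) (HH : is_group H) (f : pcar P -> pcar H)
  (Hf : is_hom P H f).
Local Notation e := (peqv H).
Local Notation memH := (pmem H).

Lemma hm_mem x : pmem P x -> memH (f x). Proof. apply Hf. Qed.
Lemma hm_eqv x y : pmem P x -> pmem P y -> peqv P x y -> e (f x) (f y). Proof. apply Hf. Qed.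
Lemma hm_mul x y : pmem P x -> pmem P y -> e (f (pmul P x y)) (pmul H (f x) (f y)). Proof. apply Hf. Qed.

Hint Resolve hm_mem : ag.
Ltac tr b := apply (ag_trans _ HH _ b); auto with ag.
Ltac sy := apply (ag_sym _ HH); auto with ag.

Lemma hm_one : e (f (pone P)) (pone H).
Proof.
  apply ag_idem; auto with ag.
  tr (f (pmul P (pone P) (pone P))). sy. apply hm_mul; auto with ag.
  apply hm_eqv; auto with ag. apply ag_idl; auto with ag.
Qed.

Lemma ker_normal : normal_sub P (fun x => pmem P x /\ e (f x) (pone H)).
Proof.
  split; [|split; [|split; [|split; [|split]]]].
  - tauto.
  - split; auto with ag. apply hm_one.
  - intros x y [Hx Ex] [Hy Ey]. split; auto with ag.
    tr (pmul H (f x) (f y)). apply hm_mul; auto with ag.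
    tr (pmul H (pone H) (pone H)). apply ag_mulc; auto with ag. apply ag_idl; auto with ag.
  - intros x [Hx Ex]. split; auto with ag.
    tr (pmul H (f (pinv P x)) (pone H)). sy. apply ag_idr; auto with ag.
    tr (pmul H (f (pinv P x)) (f x)). apply ag_mulc; auto with ag. sy.
    tr (f (pmul P (pinv P x) x)). sy. apply hm_mul; auto with ag.
    tr (f (pone P)). apply hm_eqv; auto with ag. apply ag_invl; auto with ag. apply hm_one.
  - intros x y [Hx Ex] Hy. split; auto with ag.
    tr (pmul H (f (pmul P (pinv P y) x)) (f y)). apply hm_mul; auto with ag.
    tr (pmul H (pmul H (f (pinv P y)) (f x)) (f y)). apply ag_mulc; auto with ag. apply hm_mul; auto with ag.
    tr (pmul H (pmul H (f (pinv P y)) (pone H)) (f y)). apply ag_mulc; auto with ag. apply ag_mulc; auto with ag.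
    tr (pmul H (f (pinv P y)) (f y)). apply ag_mulc; auto with ag. apply ag_idr; auto with ag.
    tr (f (pmul P (pinv P y) y)). sy. apply hm_mul; auto with ag.
    tr (f (pone P)). apply hm_eqv; auto with ag. apply ag_invl; auto with ag. apply hm_one.
  - intros x y [Hx Ex] Hy E. split; auto with ag.
    tr (f x). sy. apply hm_eqv; auto with ag.
Qed.

Lemma ker_eq x y : pmem P x -> pmem P y -> e (f (pmul P x (pinv P y))) (pone H) -> e (f x) (f y).
Proof.
  intros Hx Hy E.
  tr (f (pmul P (pmul P x (pinv P y)) y)).
  { apply hm_eqv; auto with ag. apply (ag_sym _ HP); auto with ag.
    apply (ag_trans _ HP _ (pmul P x (pmul P (pinv P y) y))); auto with ag.
    apply (ag_sym _ HP); auto with ag; apply ag_assoc; auto with ag.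
    apply (ag_trans _ HP _ (pmul P x (pone P))); auto with ag.
    apply ag_mulc; auto with ag. apply ag_invl; auto with ag. apply ag_idr; auto with ag. }
  tr (pmul H (f (pmul P x (pinv P y))) (f y)). apply hm_mul; auto with ag.
  tr (pmul H (pone H) (f y)). apply ag_mulc; auto with ag. apply ag_idl; auto with ag.
Qed.
End Hom.
Section WordsJ.
Variable G : nat -> Group.
Local Notation W := (infword G).
Local Notation wf := (wf_word G).
Local Notation restr := (restr G).
Local Notation mul := (word_mul G).
Local Notation inv := (word_inv G).
Local Notation one := (word_one G).
Local Notation lidx := (lidx G).
Local Notation ipos := (ipos G).
Local Notation ilt := (ilt G).
Local Notation iw := (iw G).
Local Notation eqv := (word_eqv G).
Local Notation fp_eq := (fp_eq G).
Local Notation linv := (linv G).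
Local Notation sub := (sub G).
Local Notation Qr := (Qr G).
Local Notation NC := (NC G).

Fixpoint pick (k : nat) (x : W) (ls : list (ipos x)) : list {l | lidx (iw x l) <> k} :=
  match ls with
  | [] => []
  | l :: r => match Nat.eq_dec (lidx (iw x l)) k with
              | left _ => pick k x r
              | right h => exist _ l h :: pick k x r end end.

Lemma pick_in k x ls z : In z (pick k x ls) <-> In (proj1_sig z) ls.
Proof.
  induction ls as [|l r IH]; simpl. tauto.
  destruct (Nat.eq_dec (lidx (iw x l)) k) as [E|E]; simpl; rewrite IH.
  - split; auto. intros [Hl|]; auto. exfalso. apply (proj2_sig z). rewrite <- Hl. exact E.
  - split; (intros [H|H]; [left|right]; auto).
    + rewrite <- H; reflexivity.
    + apply sig_eq; auto.
Qed.

Lemma pick_SS k x ls : StronglySorted (ilt x) ls ->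
  StronglySorted (fun a b => ilt x (proj1_sig a) (proj1_sig b)) (pick k x ls).
Proof.
  induction ls as [|l r IH]; simpl; intros H. constructor.
  inversion H; subst. destruct (Nat.eq_dec (lidx (iw x l)) k); auto.
  constructor; auto. apply Forall_forall. intros z Hz. apply pick_in in Hz.
  rewrite Forall_forall in H3. simpl; auto.
Qed.

Lemma pick_map k x ls : map (fun a => iw x (proj1_sig a)) (pick k x ls) = filt G k (map (iw x) ls).
Proof.
  induction ls as [|l r IH]; simpl; auto.
  destruct (Nat.eq_dec (lidx (iw x l)) k) as [E|E]; unfold filt in *; simpl;
    rewrite IH; unfold lidx in *; simpl.
  - rewrite E, Nat.eqb_refl. reflexivity.
  - apply Nat.eqb_neq in E. rewrite E. reflexivity.
Qed.

Lemma restr_delete k x m s : restr x m s -> restr (delete G k x) m (filt G k s).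
Proof.
  intros [ls [H1 [H2 ->]]]. exists (pick k x ls). split; [|split].
  - apply pick_SS; auto.
  - intro z. etransitivity. apply pick_in. apply H2.
  - rewrite <- pick_map. reflexivity.
Qed.

Lemma delete_hom k : is_hom (topprod G k) (topprod G (S k)) (delete G k).
Proof.
  simpl. split; [|split].
  - intros x Hx. apply wf_delete; auto.
  - intros x y Hx Hy E. apply (eqv_by G (S k)); try (apply wf_delete; auto).
    intro m. getr Hx m. getr Hy m. exists (filt G k s), (filt G k s0).
    split; [|split]; auto using restr_delete. apply fp_filt. eauto.
  - intros x y Hx Hy. simpl in *. apply (eqv_by G (S k)).
    { apply wf_delete; apply wf_mul; auto. }
    { apply wf_mul; apply wf_delete; auto. }
    intro m. getr Hx m. getr Hy m. exists (filt G k (s ++ s0)), (filt G k s ++ filt G k s0).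
    split; [|split].
    + apply restr_delete. apply restr_mul; auto.
    + apply restr_mul; apply restr_delete; auto.
    + unfold filt. rewrite filter_app. apply fp_refl.
Qed.

Lemma psi_hom k : is_hom (topprod G k) (archipelago G) (fun w => w).
Proof.
  simpl. split; [|split].
  - intros x Hx. apply (wf_mono G 0 k); auto; lia.
  - intros x y Hx Hy E. apply Q_of_eqv; auto; apply (wf_mono G 0 k); auto; lia.
  - intros x y Hx Hy. assert (wf 0 x) by (apply (wf_mono G 0 k); auto; lia).
    assert (wf 0 y) by (apply (wf_mono G 0 k); auto; lia).
    apply Q_of_eqv; try wfs. apply (eqv_refl G 0); wfs.
Qed.

Fixpoint iter_del (j : nat) (v : W) : W :=
  match j with 0 => v | S j => delete G j (iter_del j v) end.

Lemma wf_iter j v : wf 0 v -> wf j (iter_del j v).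
Proof. intro H. induction j; simpl; auto. apply wf_delete; auto. Qed.

Lemma iter_pos j v : forall z : ipos (iter_del j v), exists l : ipos v, iw (iter_del j v) z = iw v l.
Proof.
  induction j; simpl. eauto.
  intros [z h]; simpl. apply IHj.
Qed.

End WordsJ.
Section Main.
Variable G : nat -> Group.
Local Notation W := (infword G).
Local Notation wf := (wf_word G).
Local Notation restr := (restr G).
Local Notation mul := (word_mul G).
Local Notation inv := (word_inv G).
Local Notation one := (word_one G).
Local Notation lidx := (lidx G).
Local Notation ipos := (ipos G).
Local Notation ilt := (ilt G).
Local Notation iw := (iw G).
Local Notation eqv := (word_eqv G).
Local Notation fp_eq := (fp_eq G).
Local Notation linv := (linv G).
Local Notation sub := (sub G).
Local Notation Qr := (Qr G).
Local Notation NC := (NC G).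
Variables (H : PreGrp) (f : forall k, pcar (topprod G k) -> pcar H).
Hypotheses (HH : is_group H) (Hf : forall k, is_hom (topprod G k) H (f k))
  (Hc : forall k x, pmem (topprod G k) x -> peqv H (f (S k) (delete G k x)) (f k x)).
Local Notation e := (peqv H).

Lemma fmem k x : wf k x -> pmem H (f k x).
Proof. intro Hx. apply (hm_mem _ _ _ (Hf k)); auto. Qed.
Hint Resolve fmem : ag.

Lemma f_iter j v : wf 0 v -> e (f j (iter_del G j v)) (f 0 v).
Proof.
  intro Hv. induction j.
  - simpl. apply ag_refl; auto with ag.
  - simpl. apply (ag_trans _ HH _ (f j (iter_del G j v))); auto with ag.
    apply fmem. apply wf_delete. apply wf_iter; auto.
    apply fmem. apply wf_iter; auto.
    apply Hc. apply wf_iter; auto.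
Qed.

Lemma free_ker y : wf 0 y -> free_prod_class G y -> e (f 0 y) (pone H).
Proof.
  intros Hy [v [Hv [[s Hs] E]]].
  set (M := list_max (map (fun l => lidx (iw v l)) s)).
  assert (HM : forall l, lidx (iw v l) <= M).
  { intro l. pose proof (proj1 (list_max_le (map (fun l => lidx (iw v l)) s) M) (le_n _)) as F.
    rewrite Forall_forall in F. apply F. apply (in_map (fun l => lidx (iw v l))). apply Hs. }
  set (D := iter_del G (S M) v).
  assert (HD : wf (S M) D) by (apply wf_iter; auto).
  assert (ED : eqv D one).
  { apply (eqv_by G (S M)); auto using wf_one. intro m. exists [], [].
    split; [|split]; [|apply restr_one|apply fp_refl].
    exists []. split. constructor. split; [|reflexivity].
    intro l. split; [intros []|]. intros _. exfalso.
    destruct (iter_pos G (S M) v l) as [l0 El].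
    pose proof (wf_ge _ _ _ HD l) as X. pose proof (HM l0) as Y.
    fold D in El. rewrite El in X. lia. }
  apply (ag_trans _ HH _ (f 0 v)); auto with ag.
  { apply (hm_eqv _ _ _ (Hf 0)); auto. }
  apply (ag_trans _ HH _ (f (S M) D)); auto with ag.
  { apply (ag_sym _ HH); auto with ag. apply f_iter; auto. }
  apply (ag_trans _ HH _ (f (S M) one)); auto with ag.
  { apply fmem, wf_one. }
  { apply (hm_eqv _ _ _ (Hf (S M))); auto. apply wf_one. }
  apply (hm_one _ _ (topprod_group G (S M)) HH _ (Hf (S M))).
Qed.

Lemma NC_ker x : NC x -> e (f 0 x) (pone H).
Proof.
  intros [Hx F].
  refine (proj2 (F (fun x => pmem (topprod G 0) x /\ e (f 0 x) (pone H)) _ _)).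
  - apply (ker_normal _ _ (topprod_group G 0) HH _ (Hf 0)).
  - intros y Hy Sy. split; auto. apply free_ker; auto.
Qed.

Lemma f0_fk k x : wf k x -> e (f 0 x) (f k x).
Proof.
  revert x. induction k; intros x Hx.
  - apply ag_refl; auto with ag.
  - assert (Hk : wf k x) by (apply (wf_mono G k (S k)); auto).
    assert (H0 : wf 0 x) by (apply (wf_mono G 0 (S k)); auto; lia).
    apply (ag_trans _ HH _ (f k x)); auto with ag.
    apply (ag_trans _ HH _ (f (S k) (delete G k x))); auto with ag.
    { apply fmem, wf_delete; auto. }
    { apply (ag_sym _ HH); auto with ag. all: try (apply fmem, wf_delete; auto). all: try (apply Hc; auto). }
    apply (hm_eqv _ _ _ (Hf (S k))); auto. apply wf_delete; auto.
    apply (sub_full_eqv G (S k)); auto. intro l. pose proof (wf_ge _ _ _ Hx l). lia.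
Qed.
End Main.

Theorem proposition14 (G : nat -> Group) :
  is_direct_limit (topprod G) (fun k => delete G k)
    (archipelago G) (fun k (w : infword G) => w).
Proof.
  split. intro k; apply topprod_group.
  split. intro k; apply delete_hom.
  split. apply archipelago_group.
  split. intro k; apply psi_hom.
  split. intros k x Hx. exact (Q_delete G k x Hx).
  intros H f HH Hf Hc. exists (f 0). split; [|split].
  - split; [|split].
    + intros x Hx. apply (hm_mem _ _ _ (Hf 0)); auto.
    + intros x y Hx Hy E. apply (ker_eq _ _ (topprod_group G 0) HH _ (Hf 0)); auto.
      apply (NC_ker G H f HH Hf Hc). exact E.
    + intros x y Hx Hy. apply (hm_mul _ _ _ (Hf 0)); auto.
  - intros k x Hx. apply (f0_fk G H f HH Hf Hc); auto.
  - intros u' Hu' Hu'2 y Hy. exact (Hu'2 0 y Hy).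
Qed.
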